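(* Let $\mathbf c:[-l/2,l/2]\to\mathbb R^3$ ($l>0$) be an embedded arc parametrized by arc-length with nowhere vanishing curvature, and let $C$ be its image. Then $C$ admits a positive symmetry and a negative symmetry at the same time if and only if $C$ lies in a plane and $C$ has a non-trivial symmetry.
   Context: A symmetry of $C$ is an isometry $T\ne\mathrm{id}$ of $\mathbb R^3$ with $T(C)=C$; it is non-trivial if $T(\mathbf x)\ne\mathbf x$ for some $\mathbf x\in C$, and positive (resp. negative) if $T$ preserves (resp. reverses) the orientation of $\mathbb R^3$. *)

(* Defs.v *)
From HB Require Import structures.
From mathcomp Require Import all_boot all_order all_algebra.
From mathcomp Require Import all_classical all_reals all_analysis.
Set Implicit Arguments. Unset Strict Implicit. Unset Printing Implicit Defensive.
Import Order.TTheory GRing.Theory Num.Theory.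
Import numFieldNormedType.Exports.
Local Open Scope classical_set_scope.
Local Open Scope ring_scope.

Section Defs.
Variable R : realType.
Local Notation V := 'rV[R]_3.

Definition dotp (x y : V) : R := \sum_(i < 3) x 0 i * y 0 i.
Definition sqdist (x y : V) : R := dotp (x - y) (x - y).

Definition isometry (T : V -> V) : Prop := forall x y, sqdist (T x) (T y) = sqdist x y.

Definition symmetry_of (C : set V) (T : V -> V) : Prop :=
  [/\ isometry T, T <> id & T @` C = C].

Definition nontrivial_on (C : set V) (T : V -> V) : Prop := exists2 x, C x & T x <> x.

Definition orientation_preserving (T : V -> V) : Prop :=
  exists (A : 'M[R]_3) (b : V), 0 < \det A /\ forall x, T x = x *m A + b.
Definition orientation_reversing (T : V -> V) : Prop :=
  exists (A : 'M[R]_3) (b : V), \det A < 0 /\ forall x, T x = x *m A + b.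

Definition planar (C : set V) : Prop :=
  exists (n : V) (d : R), n != 0 /\ forall x, C x -> dotp n x = d.

(* c is (twice differentiable and) parametrized by arc length on [a,b],
   with nowhere vanishing curvature |c''| *)
Definition unit_speed_nonzero_curvature (c : R -> V) (a b : R) : Prop :=
  forall s, a <= s <= b ->
    [/\ derivable c s 1, dotp (derive1 c s) (derive1 c s) = 1,
        derivable (derive1 c) s 1 & derive1 (derive1 c) s != 0].

(* embedded arc: injective on [a,b] (continuity follows from differentiability) *)
Definition embedded_on (c : R -> V) (a b : R) : Prop :=
  forall s t, a <= s <= b -> a <= t <= b -> c s = c t -> s = t.

End Defs.

(* Main.v *)
Require Import Defs.
From HB Require Import structures.
From mathcomp Require Import all_boot all_order all_algebra.
From mathcomp Require Import all_classical all_reals all_analysis.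
From mathcomp Require Import ring lra.
Set Implicit Arguments. Unset Strict Implicit. Unset Printing Implicit Defensive.
Import Order.TTheory GRing.Theory Num.Theory.
Import numFieldNormedType.Exports.
Local Open Scope classical_set_scope.
Local Open Scope ring_scope.

Section Basics.
Variable R : realType.
Local Notation V := 'rV[R]_3.
Definition i0 : 'I_3 := @Ordinal 3 0 isT.
Definition i1 : 'I_3 := @Ordinal 3 1 isT.
Definition i2 : 'I_3 := @Ordinal 3 2 isT.

Lemma sum3 (F : 'I_3 -> R) : \sum_(i < 3) F i = F i0 + F i1 + F i2.
Proof.
rewrite !big_ord_recr big_ord0 /= add0r.
by congr (F _ + F _ + F _); apply: val_inj.
Qed.

Lemma ord3P (P : 'I_3 -> Prop) : P i0 -> P i1 -> P i2 -> forall i, P i.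
Proof.
move=> H0 H1 H2 [[|[|[|n]]] Hn] //.
- by have -> : Ordinal Hn = i0 by apply: val_inj.
- by have -> : Ordinal Hn = i1 by apply: val_inj.
- by have -> : Ordinal Hn = i2 by apply: val_inj.
Qed.

Lemma rV3P (x y : V) : x 0 i0 = y 0 i0 -> x 0 i1 = y 0 i1 -> x 0 i2 = y 0 i2 -> x = y.
Proof.
move=> H0 H1 H2; apply/rowP; apply: ord3P; by rewrite ?mxE.
Qed.

Lemma dotpE (x y : V) : dotp x y = x 0 i0 * y 0 i0 + x 0 i1 * y 0 i1 + x 0 i2 * y 0 i2.
Proof. by rewrite /dotp sum3. Qed.

Lemma mulmx3E (x : V) (A : 'M[R]_3) j :
  (x *m A) 0 j = x 0 i0 * A i0 j + x 0 i1 * A i1 j + x 0 i2 * A i2 j.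
Proof. by rewrite mxE sum3. Qed.

Lemma dotp_ge0 (x : V) : 0 <= dotp x x.
Proof. rewrite dotpE; nra. Qed.

Lemma dotp_eq0 (x : V) : dotp x x = 0 -> x = 0.
Proof.
rewrite dotpE => H; apply: rV3P; rewrite mxE; nra.
Qed.

Lemma sqdist_eq0 (x y : V) : sqdist x y = 0 -> x = y.
Proof. by move/dotp_eq0/eqP; rewrite subr_eq0 => /eqP. Qed.


Lemma det3 (M : 'M[R]_3) : \det M =
  M i0 i0 * (M i1 i1 * M i2 i2 - M i1 i2 * M i2 i1)
 - M i0 i1 * (M i1 i0 * M i2 i2 - M i1 i2 * M i2 i0)
 + M i0 i2 * (M i1 i0 * M i2 i1 - M i1 i1 * M i2 i0).
Proof.
have -> : M = \matrix_(i < 3, j < 3) M (inord i) (inord j).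
  by apply/matrixP => i j; rewrite mxE !inord_val.
rewrite (expand_det_row _ ord0) !big_ord_recl big_ord0 /cofactor.
rewrite !(expand_det_row _ ord0) !big_ord_recl !big_ord0 /cofactor.
rewrite !det_mx11 !mxE /=.
rewrite !expr0 !expr1 !expr2 /=.
ring.
Qed.

Lemma addE (x y : V) j : (x + y) 0 j = x 0 j + y 0 j.
Proof. by rewrite mxE. Qed.

Lemma dotpC (x y : V) : dotp x y = dotp y x.
Proof. rewrite !dotpE; ring. Qed.
Lemma dotpDr (x y z : V) : dotp x (y + z) = dotp x y + dotp x z.
Proof. rewrite !dotpE !mxE; ring. Qed.
Lemma dotpDl (x y z : V) : dotp (y + z) x = dotp y x + dotp z x.
Proof. rewrite !dotpE !mxE; ring. Qed.
Lemma dotpBr (x y z : V) : dotp x (y - z) = dotp x y - dotp x z.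
Proof. rewrite !dotpE !mxE; ring. Qed.
Lemma dotpBl (x y z : V) : dotp (y - z) x = dotp y x - dotp z x.
Proof. rewrite !dotpE !mxE; ring. Qed.
Lemma dotpZr (x y : V) k : dotp x (k *: y) = k * dotp x y.
Proof. rewrite !dotpE !mxE; ring. Qed.
Lemma dotpZl (x y : V) k : dotp (k *: y) x = k * dotp y x.
Proof. rewrite !dotpE !mxE; ring. Qed.

Lemma dotp_polar (p q : V) :
  dotp p q = (dotp p p + dotp q q - dotp (p - q) (p - q)) / 2.
Proof. rewrite !dotpE !mxE; by field. Qed.

Lemma dotp_mx (x y : V) : dotp x y = (x *m y^T) 0 0.
Proof. by rewrite /dotp mxE; apply: eq_bigr => i _; rewrite mxE. Qed.

Lemma orth_dotp (A : 'M[R]_3) (x y : V) : A *m A^T = 1%:M ->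
  dotp (x *m A) (y *m A) = dotp x y.
Proof.
move=> HA; rewrite !dotp_mx trmx_mul mulmxA -(mulmxA x) HA mulmx1 //.
Qed.

Lemma rowE3 (A : 'M[R]_3) i j : A i j = ((delta_mx 0 i : V) *m A) 0 j.
Proof. by rewrite -rowE mxE. Qed.

Lemma mx_ext (A B : 'M[R]_3) : (forall x : V, x *m A = x *m B) -> A = B.
Proof. by move=> H; apply/matrixP => i j; rewrite !rowE3 H. Qed.

Lemma iso_affine (T : V -> V) : Defs.isometry T ->
  exists (A : 'M[R]_3) (b : V), (forall x, T x = x *m A + b) /\ A *m A^T = 1%:M.
Proof.
move=> iT; pose b := T 0.
have [U UE] : {U : V -> V | forall x, U x = T x - b} by exists (fun x => T x - b).
have dU x y : dotp (U x) (U y) = dotp x y.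
  have h1 := iT x y; have h2 := iT x 0; have h3 := iT y 0.
  move: h1 h2 h3; rewrite /sqdist !subr0 => h1 h2 h3.
  rewrite dotp_polar (dotp_polar x y) -h1.
  have -> : U x - U y = T x - T y.
    by apply: rV3P; rewrite !UE !mxE; ring.
  by rewrite !UE /b h2 h3.
pose e i := (delta_mx 0 i : V).
pose A := \matrix_(i < 3, j < 3) U (e i) 0 j.
have xA x : x *m A = x 0 i0 *: U (e i0) + x 0 i1 *: U (e i1) + x 0 i2 *: U (e i2).
  by apply: rV3P; rewrite !mulmx3E !mxE.
have dxe x i : dotp x (e i) = x 0 i.
  rewrite dotpE !mxE; move: i; apply: ord3P => /=; ring.
have UA x : U x = x *m A.
  apply/eqP; rewrite -subr_eq0; apply/eqP/dotp_eq0.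
  rewrite xA !(dotpBl, dotpBr, dotpDl, dotpDr, dotpZl, dotpZr) !dU !dxe.
  rewrite ![dotp (e _) x]dotpC !dxe !mxE /= dotpE; ring.
exists A, b; split.
  by move=> x; rewrite -UA UE subrK.
apply/matrixP => i j.
have -> : (A *m A^T) i j = dotp (U (e i)) (U (e j)).
  by rewrite dotp_mx !mxE; apply: eq_bigr => k _; rewrite !mxE.
by rewrite dU dxe !mxE eq_sym.
Qed.

Lemma affine_uniq (A1 A2 : 'M[R]_3) (b1 b2 : V) :
  (forall x, x *m A1 + b1 = x *m A2 + b2) -> A1 = A2 /\ b1 = b2.
Proof.
move=> H; have hb : b1 = b2 by have := H 0; rewrite !mul0mx !add0r.
split=> //; apply: mx_ext => x; have := H x; rewrite hb; exact: addIr.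
Qed.

Lemma agree_planar (C : set V) (A1 A2 : 'M[R]_3) (b1 b2 : V) : A1 != A2 ->
  (forall x, C x -> x *m A1 + b1 = x *m A2 + b2) -> planar C.
Proof.
move=> neq H.
have [i [j Hij]] : exists i j, A1 i j != A2 i j.
  apply/not_existsP => H1; move/negP: neq; apply; apply/eqP/matrixP => i j.
  apply/eqP; apply/negP => H2; apply: (H1 i); exists j; exact/negP.
exists (\row_k (A1 k j - A2 k j)), ((b2 - b1) 0 j); split.
  apply/eqP => n0; move: Hij; have := congr1 (fun m : V => m 0 i) n0.
  by rewrite !mxE => /eqP; rewrite subr_eq0 => ->.
move=> x Cx; have := congr1 (fun m : V => m 0 j) (H x Cx).
rewrite !addE !mulmx3E dotpE !mxE => E; lra.
Qed.

Definition cross (u v : V) : V := \row_(k < 3)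
  (if k == i0 then u 0 i1 * v 0 i2 - u 0 i2 * v 0 i1
   else if k == i1 then u 0 i2 * v 0 i0 - u 0 i0 * v 0 i2
   else u 0 i0 * v 0 i1 - u 0 i1 * v 0 i0).

Lemma crossE (u v : V) :
  [/\ (cross u v) 0 i0 = u 0 i1 * v 0 i2 - u 0 i2 * v 0 i1,
      (cross u v) 0 i1 = u 0 i2 * v 0 i0 - u 0 i0 * v 0 i2 &
      (cross u v) 0 i2 = u 0 i0 * v 0 i1 - u 0 i1 * v 0 i0].
Proof. by rewrite !mxE. Qed.

Lemma gram (u v x : V) :
  dotp (cross u v) (cross u v) *: x = ((dotp x u) * dotp v v - dotp x v * dotp u v) *: u
     + ((dotp x v) * dotp u u - dotp x u * dotp u v) *: v + dotp x (cross u v) *: cross u v.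
Proof.
have [E0 E1 E2] := crossE u v.
apply: rV3P; rewrite !mxE !dotpE E0 E1 E2 /=; ring.
Qed.

Lemma cross_norm (u v : V) :
  dotp (cross u v) (cross u v) = dotp u u * dotp v v - dotp u v ^+ 2.
Proof. have [E0 E1 E2] := crossE u v; rewrite !dotpE E0 E1 E2; ring. Qed.

Lemma cross_orth (u v : V) : dotp (cross u v) u = 0 /\ dotp (cross u v) v = 0.
Proof. have [E0 E1 E2] := crossE u v; rewrite !dotpE E0 E1 E2; split; ring. Qed.

Lemma dotp_gt0 (u : V) : u != 0 -> 0 < dotp u u.
Proof.
move=> u0; rewrite lt_def dotp_ge0 andbT; apply/eqP => /dotp_eq0 H.
by move: u0; rewrite H eqxx.
Qed.

Lemma fix_ext (A B : 'M[R]_3) (u v : V) :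
  dotp (cross u v) (cross u v) != 0 ->
  u *m A = u *m B -> v *m A = v *m B -> cross u v *m A = cross u v *m B ->
  A = B.
Proof.
move=> N0 hu hv hw; apply: mx_ext => x.
apply: (scalerI N0).
rewrite !scalemxAl gram !mulmxDl -!scalemxAl; congr (_ *: _ + _ *: _ + _ *: _); assumption.
Qed.

Lemma wA_pm (A : 'M[R]_3) (u v : V) : A *m A^T = 1%:M ->
  dotp u v = 0 -> dotp (cross u v) (cross u v) != 0 ->
  u *m A = u -> v *m A = v ->
  cross u v *m A = cross u v \/ cross u v *m A = - cross u v.
Proof.
move=> HA uv N0 hu hv; set w := cross u v; set z := w *m A.
have [wu wv] := cross_orth u v.
have zu : dotp z u = 0 by rewrite /z -[X in dotp _ X]hu orth_dotp.
have zv : dotp z v = 0 by rewrite /z -[X in dotp _ X]hv orth_dotp.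
have zz : dotp z z = dotp w w by rewrite /z orth_dotp.
have G := gram u v z; rewrite -/w zu zv !mul0r !subrr !scale0r !add0r in G.
set N := dotp w w in N0 zz G; set k := dotp z w in G.
have : N * N * dotp z z = k * k * N.
  have := congr1 (fun y => dotp y y) G; rewrite /= !dotpZl !dotpZr -/N => H.
  by rewrite !mulrA in H.
rewrite zz => E.
have [kN|kN] : k = N \/ k = - N.
  have E2 : (k - N) * (k + N) * N = k * k * N - N * N * N by ring.
  have : (k - N) * (k + N) * N = 0 by rewrite E2 E subrr.
  move/eqP; rewrite mulf_eq0 (negbTE N0) orbF mulf_eq0 subr_eq0 addr_eq0.
  by case/orP => /eqP ->; [left|right].
- left; apply: (scalerI N0); by rewrite G kN.
- right; apply: (scalerI N0); by rewrite G kN scaleNr scalerN.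
Qed.

Lemma orth_fix2 (A1 A2 : 'M[R]_3) (u v : V) :
  A1 *m A1^T = 1%:M -> A2 *m A2^T = 1%:M -> dotp u v = 0 -> u != 0 -> v != 0 ->
  u *m A1 = u -> v *m A1 = v -> u *m A2 = u -> v *m A2 = v ->
  A1 != 1%:M -> A2 != 1%:M -> A1 = A2.
Proof.
move=> H1 H2 uv u0 v0 hu1 hv1 hu2 hv2 n1 n2.
have N0 : dotp (cross u v) (cross u v) != 0.
  rewrite cross_norm uv expr0n /= subr0; apply/lt0r_neq0/mulr_gt0; exact: dotp_gt0.
have P1 := wA_pm H1 uv N0 hu1 hv1; have P2 := wA_pm H2 uv N0 hu2 hv2.
case: P1 => [E1|E1].
  have : A1 = 1%:M by apply: (fix_ext N0); rewrite ?mulmx1.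
  by move/eqP; rewrite (negbTE n1).
case: P2 => [E2|E2].
  have : A2 = 1%:M by apply: (fix_ext N0); rewrite ?mulmx1.
  by move/eqP; rewrite (negbTE n2).
by apply: (fix_ext N0); rewrite ?hu1 ?hu2 ?hv1 ?hv2 ?E1 ?E2.
Qed.

Lemma refl_sym (C : set V) (n : V) (d : R) : n != 0 ->
  (forall x, C x -> dotp n x = d) ->
  exists (S : 'M[R]_3) (bs : V), [/\ \det S < 0,
    Defs.isometry (fun x => x *m S + bs), (fun x => x *m S + bs) <> id &
    forall x, C x -> x *m S + bs = x].
Proof.
move=> n0 HC; set N := dotp n n.
have N0 : N != 0 by apply/lt0r_neq0/dotp_gt0.
set t := 2 / N.
have tN : t * N = 2 by rewrite /t divfK.
have t0 : t != 0 by rewrite /t mulf_neq0 ?invr_eq0 // pnatr_eq0.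
pose S : 'M[R]_3 := 1%:M - t *: (n^T *m n).
pose bs : V := (t * d) *: n.
have Sij i j : S i j = (i == j)%:R - t * (n 0 i * n 0 j).
  by rewrite !mxE big_ord1 /trmx mxE.
have sigE x : x *m S + bs = x - (t * (dotp n x - d)) *: n.
  by apply: rV3P; rewrite !addE !mulmx3E !Sij dotpE !mxE /=; ring.
exists S, bs; split.
- have -> : \det S = 1 - t * N by rewrite det3 !Sij /= /N dotpE; ring.
  by rewrite tN; lra.
- move=> x y; rewrite /sqdist !sigE.
  have -> : x - (t * (dotp n x - d)) *: n - (y - (t * (dotp n y - d)) *: n)
      = (x - y) - (t * dotp n (x - y)) *: n.
    by apply: rV3P; rewrite !mxE !dotpE !mxE; ring.
  rewrite !(dotpBl, dotpBr, dotpZl, dotpZr) -/N (dotpC x n) (dotpC y n) (dotpC y x) /t.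
  by field.
- move=> H; pose x := ((d + 1) / N) *: n.
  have := congr1 (fun f => f x) H; rewrite /= sigE.
  have -> : dotp n x - d = 1 by rewrite /x dotpZr -/N divfK //; ring.
  rewrite mulr1 => /eqP; rewrite subr_eq addrC -subr_eq subrr eq_sym scaler_eq0.
  by rewrite (negbTE t0) (negbTE n0).
- by move=> x Cx; rewrite sigE HC // subrr mulr0 scale0r subr0.
Qed.
End Basics.


Section An.
Variable R : realType.
Local Notation V := 'rV[R]_3.

Lemma nbhsP (x : R) (P : R -> Prop) : (\forall h \near x, P h) ->
  exists2 d, 0 < d & forall h, `|h - x| < d -> P h.
Proof.
move=> /nbhs_ballP [d d0 H]; exists d => // h hd; apply: H.
by rewrite /ball /= distrC.
Qed.

Lemma dnbhs0P (P : R -> Prop) : (\forall h \near 0^', P h) ->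
  exists2 d, 0 < d & forall h, 0 < `|h| < d -> P h.
Proof.
move=> /nbhs_ballP [d d0 H]; exists d => // h /andP[h0 hd]; apply: H.
  by rewrite /ball /= sub0r normrN.
by rewrite -normr_gt0.
Qed.

Lemma dotp_cont : continuous (fun v : V => dotp v v).
Proof.
move=> v.
have -> : (fun v : V => dotp v v) = (fun v : V => v 0 i0 * v 0 i0 + v 0 i1 * v 0 i1 + v 0 i2 * v 0 i2).
  by apply: funext => w; rewrite dotpE.
have h i : {for v, continuous (fun w : V => w 0 i)} := @coord_continuous R 1 3 0 i v.
exact: (continuousD (continuousD (continuousM (h i0) (h i0)) (continuousM (h i1) (h i1))) (continuousM (h i2) (h i2))).
Qed.


Lemma UC (f : R -> V) (s : R) : derivable f s 1 -> dotp (derive1 f s) (derive1 f s) = 1 ->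
  forall e : R, 0 < e -> exists2 d : R, 0 < d & forall h : R, `|h| < d ->
    `|sqdist (f (s + h)) (f s) - h ^+ 2| <= e * h ^+ 2.
Proof.
move=> df d1 e e0.
have q : (fun h : R => h^-1 *: (f (h *: 1 + s) - f s)) @ 0^' --> derive1 f s.
  by rewrite derive1E; exact: df.
have q2 := cvg_comp _ _ q (@dotp_cont (derive1 f s)).
move/cvgrPdist_le: q2 => /(_ e e0) /dnbhs0P [d d0 Hd].
exists d => // h hd.
have [->|h0] := eqVneq h 0.
  by rewrite addr0 /sqdist subrr expr0n /= subr0 mulr0 dotpE !mxE !mulr0 !addr0 normr0.
have := Hd h; rewrite normr_gt0 h0 hd /= d1 => /(_ isT).
have hA : (h%:A : R) = h by rewrite /GRing.scale /= mulr1.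
rewrite /= dotpZl dotpZr hA (addrC h s) -/(sqdist _ _) => H.
have h2 : 0 < h ^+ 2 by rewrite lt_def sqrf_eq0 h0 sqr_ge0.
have -> : sqdist (f (s + h)) (f s) - h ^+ 2 = - (h ^+ 2 * (1 - h^-1 * (h^-1 * sqdist (f (s + h)) (f s)))).
  by field.
rewrite normrN normrM (ger0_norm (sqr_ge0 h)) mulrC ler_pM2r //.
Qed.


Lemma ballV (x y : V) r : 0 < r -> (forall i, `|x 0 i - y 0 i| < r) -> ball x r y.
Proof.
move=> r0 H; split => // i j; rewrite (ord1 i) /ball /=; exact: H.
Qed.

Lemma coord_le_sqdist (x y : V) i : (x 0 i - y 0 i) ^+ 2 <= sqdist x y.
Proof.
rewrite /sqdist dotpE !mxE -!expr2; have := sqr_ge0 (x 0 i0 - y 0 i0); have := sqr_ge0 (x 0 i1 - y 0 i1); have := sqr_ge0 (x 0 i2 - y 0 i2); move: i; apply: ord3P; lra.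
Qed.

Section Curve.
Variables (l : R) (c : R -> V).
Hypothesis l0 : 0 < l.
Hypothesis emb : embedded_on c (- (l / 2)) (l / 2).
Hypothesis usc : unit_speed_nonzero_curvature c (- (l / 2)) (l / 2).
Local Notation a := (- (l / 2)).
Local Notation b := (l / 2).
Local Notation I := (fun s => a <= s <= b).

Lemma UCc (s : R) : I s -> forall e : R, 0 < e -> exists2 d : R, 0 < d & forall h : R, `|h| < d ->
    `|sqdist (c (s + h)) (c s) - h ^+ 2| <= e * h ^+ 2.
Proof. by move=> Is; have [H1 H2 _ _] := usc Is; exact: UC. Qed.

Lemma ccont (s : R) : I s -> forall e : R, 0 < e -> exists2 d : R, 0 < d &
  forall t : R, `|t - s| < d -> sqdist (c t) (c s) < e.
Proof.
move=> Is e e0; have [d1 d10 H] := UCc Is ltr01.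
exists (Num.min d1 (Num.min 1 (e / 2))).
  by rewrite !lt_min d10 ltr01 divr_gt0.
move=> t; rewrite !lt_min => /and3P [h1 h2 h3].
have := H (t - s) h1; have -> : s + (t - s) = t by rewrite addrC subrK.
rewrite mul1r => /ler_normlP [_ Hle].
have hn : (t - s) ^+ 2 = `|t - s| ^+ 2 by rewrite real_normK // num_real.
have hge : 0 <= `|t - s| by [].
nra.
Qed.

Lemma c_cont (s : R) : I s -> {for s, continuous c}.
Proof.
by move=> Is; have [H1 _ _ _] := usc Is; apply/differentiable_continuous/derivable1_diffP.
Qed.

Lemma icont (s : R) : I s -> forall e : R, 0 < e -> exists2 d : R, 0 < d &
  forall t : R, I t -> sqdist (c t) (c s) < d -> `|t - s| < e.
Proof.
move=> Is e e0.
pose K : set R := `[a, s - e]%classic `|` `[s + e, b]%classic.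
have KI t : K t -> I t.
  case=> /=; rewrite in_itv /= => /andP [h1 h2]; apply/andP; split => //.
    move/andP: Is => [_ sb]; lra.
  move/andP: Is => [aS _]; lra.
have cK : compact K by apply: compactU; exact: segment_compact.
have ccK : compact (c @` K).
  apply: continuous_compact => //; apply: continuous_in_subspaceT => t.
  rewrite inE => Kt; exact: c_cont (KI _ Kt).
have clK : closed (c @` K) by apply: compact_closed => //; exact: norm_hausdorff.
have nK : (~` (c @` K)) (c s).
  move=> [t Kt cts]; have ts := emb (KI _ Kt) Is cts.
  move: Kt; rewrite ts /K /=; rewrite !in_itv /= => -[] /andP [h1 h2]; lra.
have : nbhs (c s) (~` (c @` K)) by apply: open_nbhs_nbhs; split => //; exact: closed_openC.
move=> /nbhs_ballP [r r0 Hr].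
exists (r ^+ 2); first by rewrite exprn_gt0.
move=> t It hd; rewrite real_ltNge ?num_real //; apply/negP => ets.
have : (~` (c @` K)) (c t).
  apply: Hr; apply: ballV => // i.
  have := coord_le_sqdist (c t) (c s) i.
  rewrite -normrN opprB.
  have hn : (c t 0 i - c s 0 i) ^+ 2 = `|c t 0 i - c s 0 i| ^+ 2 by rewrite real_normK // num_real.
  move=> h; have hge : 0 <= `|c t 0 i - c s 0 i| by [].
  have hz : `|c t 0 i - c s 0 i| ^+ 2 < r ^+ 2 by rewrite -hn; exact: le_lt_trans h hd.
  by rewrite -(@ltr_pXn2r _ 2) // ?nnegrE ?ltW.
apply; exists t => //.
move: ets; rewrite /K /= !in_itv /=.
move/andP: It => [haT htB].
have [ts|ts] := lerP t s.
  move=> h; left; apply/andP; split => //; lra.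
move=> h; right; apply/andP; split => //; lra.
Qed.

End Curve.
End An.


Section C.
Variable R : realType.
Local Notation V := 'rV[R]_3.

Lemma within_cont_eps (f : R -> R) (a b : R) :
  (forall s : R, a <= s <= b -> forall e : R, 0 < e -> exists2 d : R, 0 < d &
     forall t : R, a <= t <= b -> `|t - s| < d -> `|f t - f s| < e) ->
  {within `[a, b], continuous f}.
Proof.
move=> H; apply/subspace_continuousP => x /=; rewrite in_itv /= => Ax.
apply/cvgrPdist_lt => e e0.
have [d d0 Hd] := H x Ax e e0.
rewrite near_withinE; apply/nbhs_ballP; exists d => // t /= hb.
rewrite in_itv /= => At; rewrite distrC; apply: Hd => //.
by rewrite distrC.
Qed.

Lemma is_derive_eps (f : R -> R) (x L : R) :
  (forall e : R, 0 < e -> exists2 d : R, 0 < d &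
     forall h : R, 0 < `|h| < d -> `|(f (x + h) - f x) / h - L| < e) ->
  is_derive x 1 f L.
Proof.
move=> H.
have cv : (fun h : R => h^-1 *: (f (h *: 1 + x) - f x)) @ 0^' --> L.
  apply/cvgrPdist_lt => e e0; have [d d0 Hd] := H e e0.
  apply/nbhs_ballP; exists d => // h /= hb hne.
  rewrite distrC /GRing.scale /= mulr1 (addrC h) mulrC; apply: Hd.
  by rewrite normr_gt0 hne /=; move: hb; rewrite /ball /= sub0r normrN.
apply: DeriveDef; first exact: (cvgP _ cv).
by rewrite /derive; apply: cvg_lim.
Qed.


Definition UCat (f : R -> V) (x : R) := forall e : R, 0 < e -> exists2 d : R, 0 < d &
  forall h : R, `|h| < d -> `|sqdist (f (x + h)) (f x) - h ^+ 2| <= e * h ^+ 2.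

Lemma ratio_alg (sq h k eps : R) : 0 < eps -> eps <= 1/2 -> h != 0 -> 0 < k / h ->
  `|sq - h ^+ 2| <= eps * h ^+ 2 -> `|sq - k ^+ 2| <= eps * k ^+ 2 ->
  `|k / h - 1| <= 4 * eps.
Proof.
move=> e0 e1 h0 rho0 /ler_normlP [A1 A2] /ler_normlP [B1 B2].
set r := k / h.
have kE : k = r * h by rewrite /r divfK.
have h2 : 0 < h ^+ 2 by rewrite lt_def sqrf_eq0 h0 sqr_ge0.
rewrite kE exprMn in B1 B2.
have C1 : r ^+ 2 * (1 - eps) <= 1 + eps.
  rewrite -(ler_pM2r h2); nra.
have C2 : 1 - eps <= r ^+ 2 * (1 + eps).
  rewrite -(ler_pM2r h2); nra.
have D1 : r ^+ 2 <= 1 + 4 * eps.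
  have p0 : 0 < 1 - eps by lra.
  rewrite -(ler_pM2r p0); apply: (le_trans C1); nra.
have D2 : 1 - 2 * eps <= r ^+ 2.
  have p0 : 0 < 1 + eps by lra.
  rewrite -(ler_pM2r p0); apply: le_trans C2; nra.
rewrite ler_norml; apply/andP; split.
  have [r1|r1] := lerP r 1; last by lra.
  have : r ^+ 2 <= r by rewrite expr2 ger_pMr.
  lra.
nra.
Qed.


Lemma RL (c1 c2 : R -> V) (psi : R -> R) (a b : R) : a < b ->
  (forall x : R, a < x < b -> UCat c1 x) -> (forall x : R, a < x < b -> UCat c2 x) ->
  (forall s : R, a <= s <= b -> a <= psi s <= b) ->
  (forall s t : R, a <= s <= b -> a <= t <= b -> s < t -> psi s < psi t) ->
  (forall s : R, a <= s <= b -> forall e : R, 0 < e -> exists2 d : R, 0 < d &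
     forall t : R, a <= t <= b -> `|t - s| < d -> `|psi t - psi s| < e) ->
  psi a = a -> psi b = b ->
  (forall s t : R, a <= s <= b -> a <= t <= b ->
     sqdist (c2 (psi s)) (c2 (psi t)) = sqdist (c1 s) (c1 t)) ->
  forall t : R, a <= t <= b -> psi t = t.
Proof.
move=> ab U1 U2 pI pM pC pa pb iso.
have deriv (x : R) : a < x < b -> is_derive x 1 psi 1.
  move=> /andP[ax xb]; set y := psi x.
  have Ix : a <= x <= b by rewrite !ltW.
  have Ia : a <= a <= b by rewrite lexx ltW.
  have Ib : a <= b <= b by rewrite lexx ltW.
  have yI : a < y < b.
    apply/andP; split.
      by rewrite -[X in X < _]pa; apply: pM.
    by rewrite -[X in _ < X]pb; apply: pM.
  apply: is_derive_eps => e e0.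
  set eps := Num.min (1/2) (e/8).
  have eps0 : 0 < eps by rewrite lt_min; apply/andP; split; lra.
  have eps1 : eps <= 1/2 by rewrite ge_min lexx.
  have eps2 : eps <= e/8 by rewrite ge_min lexx orbT.
  have [d1 d10 H1] := U1 x (introT andP (conj ax xb)) eps eps0.
  have [d2 d20 H2] := U2 y yI eps eps0.
  have [d3 d30 H3] := pC x Ix d2 d20.
  exists (Num.min d1 (Num.min d3 (Num.min (x - a) (b - x)))).
    by rewrite !lt_min d10 d30 !subr_gt0 ax xb.
  move=> h /andP [h0 hd]; move: hd; rewrite !lt_min => /and4P [hd1 hd3 hda hdb].
  have xhI : a <= x + h <= b.
    move: hda hdb => /ltr_normlP [? ?] /ltr_normlP [? ?].
    apply/andP; split; lra.
  set k := psi (x + h) - y.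
  have hk : `|k| < d2.
    by apply: H3 => //; rewrite addrC addKr.
  have E : sqdist (c2 (y + k)) (c2 y) = sqdist (c1 (x + h)) (c1 x).
    by rewrite /k addrC subrK /y iso.
  have A1 := H1 h hd1; have A2 := H2 k hk; rewrite E in A2.
  have hne : h != 0 by rewrite -normr_gt0.
  have rho0 : 0 < k / h.
    have [hpos|hneg] := ltrP 0 h.
      apply: divr_gt0 => //; rewrite subr_gt0; apply: pM => //; lra.
    have hneg' : h < 0 by rewrite lt_neqAle hne hneg.
    have kneg : k < 0.
      rewrite subr_lt0; apply: pM => //; lra.
    by rewrite -mulrNN -invrN; apply: divr_gt0; rewrite oppr_gt0.
  have := ratio_alg eps0 eps1 hne rho0 A1 A2.
  rewrite /k /y => H; lra.
move=> t /andP [at_ tb].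
have [ta|ta] := eqVneq t a; first by rewrite ta pa.
have lt_at : a < t by rewrite lt_neqAle eq_sym ta at_.
have Hd : forall z, z \in `]a, t[ -> is_derive z 1 psi ((fun=> 1) z).
  move=> z; rewrite in_itv /= => /andP [h1 h2]; apply: deriv.
  apply/andP; split => //; lra.
have Hc : {within `[a, t], continuous psi}.
  apply: within_cont_eps => s /andP [s1 s2] e e0.
  have Is : a <= s <= b by apply/andP; split => //; lra.
  have [d d0 Hd'] := pC s Is e e0.
  exists d => // t' /andP [t1 t2] h; apply: Hd' => //.
  apply/andP; split => //; lra.
have [z _ Hz] := MVT lt_at Hd Hc.
move: Hz; rewrite mul1r pa => Hz; lra.
Qed.

End C.


Section Key.
Variable R : realType.
Local Notation V := 'rV[R]_3.
Variables (l : R) (c : R -> V).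
Hypothesis l0 : 0 < l.
Hypothesis emb : embedded_on c (- (l / 2)) (l / 2).
Hypothesis usc : unit_speed_nonzero_curvature c (- (l / 2)) (l / 2).
Local Notation a := (- (l / 2)).
Local Notation b := (l / 2).
Local Notation I := (fun s : R => a <= s <= b).
Local Notation C := [set c s | s in [set s | - (l / 2) <= s <= l / 2]].

Lemma key (T : V -> V) : Defs.isometry T -> T @` C = C ->
  (forall s : R, I s -> T (c s) = c s) \/ (forall s : R, I s -> T (c s) = c (- s)).
Proof.
move=> iT TC.
have hb0 : 0 < b by rewrite divr_gt0.
have ab : a < b by lra.
have [phi Hphi] : {phi : R -> R & forall s : R, I s -> I (phi s) /\ c (phi s) = T (c s)}.
  apply: (@choice R R (fun s t => I s -> I t /\ c t = T (c s))) => s.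
  have [Is|nIs] := pselect (I s); last by exists 0.
  have : C (T (c s)) by rewrite -TC; exists (c s) => //; exists s.
  by move=> [t It ct]; exists t.
have phiI s : I s -> I (phi s) by move=> /Hphi [].
have phiE s : I s -> c (phi s) = T (c s) by move=> /Hphi [].
have iso s t : I s -> I t -> sqdist (c (phi s)) (c (phi t)) = sqdist (c s) (c t).
  by move=> Is It; rewrite phiE // phiE // iT.
have inj s t : I s -> I t -> phi s = phi t -> s = t.
  move=> Is It E; apply: emb => //; apply: sqdist_eq0.
  by rewrite -iso // E /sqdist subrr; rewrite dotpE !mxE !mulr0 !addr0.
have surj u : I u -> exists2 s, I s & phi s = u.
  move=> Iu; have : (T @` C) (c u) by rewrite TC; exists u.
  move=> [x [s Is <-] Tcs]; exists s => //; apply: emb => //; first exact: phiI.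
  by rewrite phiE.
have pC s : I s -> forall e : R, 0 < e -> exists2 d : R, 0 < d &
     forall t : R, I t -> `|t - s| < d -> `|phi t - phi s| < e.
  move=> Is e e0.
  have [d1 d10 H1] := icont emb usc (phiI _ Is) e0.
  have [d2 d20 H2] := ccont usc Is d10.
  exists d2 => // t It hts; apply: H1; first exact: phiI.
  by rewrite iso //; apply: H2.
have Wc : {within `[a, b], continuous phi} by apply: within_cont_eps.
have Winj : {in `[a, b] &, injective phi}.
  by move=> s t; rewrite !in_itv /= => Is It; apply: inj.
have UC1 x : a < x < b -> UCat c x.
  move=> /andP [h1 h2]; apply: (UCc usc); apply/andP; split; exact: ltW.
case: (itv_continuous_inj_mono Wc Winj) => Hm.
- have pM s t : I s -> I t -> s < t -> phi s < phi t.
    by move=> Is It st; apply: Hm => //; rewrite in_itv.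
  have Ia : I a by rewrite lexx ltW.
  have Ib : I b by rewrite lexx ltW.
  have pa : phi a = a.
    have [s Is ps] := surj a Ia.
    have [sa|sa] := eqVneq s a; first by rewrite -[X in phi X]sa ps.
    have : phi a < phi s by apply: pM => //; rewrite lt_neqAle eq_sym sa; case/andP: Is.
    by rewrite ps; move: (phiI _ Ia) => /andP [h _]; lra.
  have pb : phi b = b.
    have [s Is ps] := surj b Ib.
    have [sb|sb] := eqVneq s b; first by rewrite -[X in phi X]sb ps.
    have : phi s < phi b by apply: pM => //; rewrite lt_neqAle sb; case/andP: Is.
    by rewrite ps; move: (phiI _ Ib) => /andP [_ h]; lra.
  left => s Is; rewrite -phiE //; congr c.
  exact: (RL ab UC1 UC1 phiI pM pC pa pb iso).
- have pM s t : I s -> I t -> s < t -> phi t < phi s.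
    by move=> Is It st; apply: Hm => //; rewrite in_itv.
  have Ia : I a by rewrite lexx ltW.
  have Ib : I b by rewrite lexx ltW.
  have pa : phi a = b.
    have [s Is ps] := surj b Ib.
    have [sa|sa] := eqVneq s a; first by rewrite -[X in phi X]sa ps.
    have : phi s < phi a by apply: pM => //; rewrite lt_neqAle eq_sym sa; case/andP: Is.
    by rewrite ps; move: (phiI _ Ia) => /andP [_ h]; lra.
  have pb : phi b = a.
    have [s Is ps] := surj a Ia.
    have [sb|sb] := eqVneq s b; first by rewrite -[X in phi X]sb ps.
    have : phi b < phi s by apply: pM => //; rewrite lt_neqAle sb; case/andP: Is.
    by rewrite ps; move: (phiI _ Ib) => /andP [h _]; lra.
  pose psi s := - phi s.
  pose c2 u := c (- u).
  have psiI s : I s -> I (psi s).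
    by move=> /phiI /andP [h1 h2]; rewrite /psi; apply/andP; split; lra.
  have psiM s t : I s -> I t -> s < t -> psi s < psi t.
    by move=> Is It st; rewrite /psi ltrN2; apply: pM.
  have psiC s : I s -> forall e : R, 0 < e -> exists2 d : R, 0 < d &
     forall t : R, I t -> `|t - s| < d -> `|psi t - psi s| < e.
    move=> Is e e0; have [d d0 Hd] := pC s Is e e0; exists d => // t It h.
    by rewrite /psi -opprD normrN; apply: Hd.
  have psia : psi a = a by rewrite /psi pa.
  have psib : psi b = b by rewrite /psi pb opprK.
  have iso2 s t : I s -> I t -> sqdist (c2 (psi s)) (c2 (psi t)) = sqdist (c s) (c t).
    by move=> Is It; rewrite /c2 /psi !opprK iso.
  have UC2 x : a < x < b -> UCat c2 x.
    move=> /andP [h1 h2] e e0.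
    have Ix : I (- x) by apply/andP; split; lra.
    have [d d0 Hd] := UCc usc Ix e0.
    exists d => // h hd; rewrite /c2 opprD.
    by have := Hd (- h); rewrite normrN sqrrN; apply.
  right => s Is; rewrite -phiE //; congr c.
  have := RL ab UC1 UC2 psiI psiM psiC psia psib iso2 Is.
  by rewrite /psi => H; rewrite -[in RHS]H opprK.
Qed.

End Key.


Section E.
Variable R : realType.
Local Notation V := 'rV[R]_3.

Lemma coordD (f : R -> V) (x : R) i : derivable f x 1 ->
  derivable (fun t => f t 0 i) x 1 /\ (derive1 f x) 0 i = 'D_1 (fun t => f t 0 i) x.
Proof.
move=> df; split; first exact: ((derivable_mxP f x 1).1 df 0 i).
by rewrite derive1E derive_mx // mxE.
Qed.

Lemma fixD (f : R -> V) (A : 'M[R]_3) (b0 : V) (x : R) : derivable f x 1 ->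
  (\forall t \near x, f t *m A + b0 = f t) -> derive1 f x *m A = derive1 f x.
Proof.
move=> df hn.
pose F i := (fun t => f t 0 i) : R -> R.
have dF i : derivable (F i) x 1 by have [] := coordD i df.
have DF i : (derive1 f x) 0 i = 'D_1 (F i) x by have [] := coordD i df.
apply/rowP => j; rewrite mulmx3E !DF.
have -> : 'D_1 (F j) x = 'D_1 (A i0 j *: F i0 + A i1 j *: F i1 + A i2 j *: F i2 + cst (b0 0 j)) x.
  apply: near_eq_derive; apply: filterS hn => t ht.
  rewrite /F /=.
  have := congr1 (fun v : V => v 0 j) ht; rewrite /= addE mulmx3E => <-.
  by rewrite !fctE /GRing.scale /= -!(mulrC (A _ j)).
rewrite deriveD; last 2 first.
- by apply: derivableD; [apply: derivableD|]; apply: derivableZ.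
- exact: derivable_cst.
rewrite derive_cst addr0 !deriveD; last 4 first.
- by apply: derivableZ.
- by apply: derivableZ.
- by apply: derivableD; apply: derivableZ.
- by apply: derivableZ.
rewrite !deriveZ //= /GRing.scale /= -!(mulrC (A _ j)) //.
Qed.


Lemma orthD (g : R -> V) (x : R) : derivable g x 1 ->
  (\forall t \near x, dotp (g t) (g t) = 1) -> dotp (g x) (derive1 g x) = 0.
Proof.
move=> dg hn.
pose F i := (fun t => g t 0 i) : R -> R.
have dF i : derivable (F i) x 1 by have [] := coordD i dg.
have DF i : (derive1 g x) 0 i = 'D_1 (F i) x by have [] := coordD i dg.
have E : 'D_1 (F i0 * F i0 + F i1 * F i1 + F i2 * F i2) x = 'D_1 (cst (1 : R)) x.
  apply: near_eq_derive; apply: filterS hn => t ht.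
  by rewrite !fctE /F -ht dotpE.
move: E; rewrite derive_cst !deriveD; last 4 first.
- by apply: derivableM.
- by apply: derivableM.
- by apply: derivableD; apply: derivableM.
- by apply: derivableM.
rewrite !deriveM // dotpE !DF /F /GRing.scale /= => E.
have -> : g x 0 i0 * 'D_1 (fun t : R => g t 0 i0) x + g x 0 i1 * 'D_1 (fun t : R => g t 0 i1) x +
    g x 0 i2 * 'D_1 (fun t : R => g t 0 i2) x = (g x 0 i0 * 'D_1 (fun t : R => g t 0 i0) x + g x 0 i0 * 'D_1 (fun t : R => g t 0 i0) x +
   (g x 0 i1 * 'D_1 (fun t : R => g t 0 i1) x + g x 0 i1 * 'D_1 (fun t : R => g t 0 i1) x) +
   (g x 0 i2 * 'D_1 (fun t : R => g t 0 i2) x + g x 0 i2 * 'D_1 (fun t : R => g t 0 i2) x)) / 2.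
  by field.
by rewrite E mul0r.
Qed.

End E.


Section F.
Variable R : realType.
Local Notation V := 'rV[R]_3.

Lemma aff_orth (T : V -> V) (A : 'M[R]_3) (b : V) : Defs.isometry T ->
  (forall x, T x = x *m A + b) -> A *m A^T = 1%:M.
Proof.
move=> iT HT; have [A' [b' [HT' oA']]] := iso_affine iT.
have [-> _] : A = A' /\ b = b' by apply: affine_uniq => x; rewrite -HT -HT'.
exact: oA'.
Qed.

Lemma aff_notid (T : V -> V) (A : 'M[R]_3) (b : V) (x0 : V) : T <> id ->
  (forall x, T x = x *m A + b) -> T x0 = x0 -> A != 1%:M.
Proof.
move=> nT HT fx; apply/eqP => A1; apply: nT; apply: funext => x.
have b0 : b = 0 by move: fx; rewrite HT A1 mulmx1 => E; rewrite -[b](addKr x0) E addNr.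
by rewrite HT A1 mulmx1 b0 addr0.
Qed.

Lemma image_fix (C : set V) (f : V -> V) : (forall x, C x -> f x = x) -> f @` C = C.
Proof.
move=> H; apply/seteqP; split => y.
  by move=> [x Cx <-]; rewrite H.
by move=> Cy; exists y => //; rewrite H.
Qed.

Lemma det_orth_neq0 (A : 'M[R]_3) : A *m A^T = 1%:M -> \det A != 0.
Proof.
move=> H; have := congr1 determinant H; rewrite det_mulmx det_tr det1 => E.
by apply/eqP => D; move: E; rewrite D mul0r => /eqP; rewrite eq_sym oner_eq0.
Qed.


Lemma near_I_at (a b t : R) : a < t < b -> \forall s \near t, a <= s <= b.
Proof.
move=> /andP [h1 h2]; apply/nbhs_ballP.
exists (Num.min (t - a) (b - t)); first by rewrite /= lt_min !subr_gt0 h1 h2.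
move=> s; rewrite /ball /= lt_min => /andP [] /ltr_normlP [? ?] /ltr_normlP [? ?].
apply/andP; split; lra.
Qed.

Section Main.
Variables (l : R) (c : R -> V).
Hypothesis l0 : 0 < l.
Hypothesis usc : unit_speed_nonzero_curvature c (- (l / 2)) (l / 2).
Local Notation a := (- (l / 2)).
Local Notation b := (l / 2).

Lemma triv_fix (A : 'M[R]_3) (b0 : V) :
  (forall s : R, a <= s <= b -> c s *m A + b0 = c s) ->
  derive1 c 0 *m A = derive1 c 0 /\
  derive1 (derive1 c) 0 *m A = derive1 (derive1 c) 0.
Proof.
move=> H.
have hb0 : 0 < b by rewrite divr_gt0.
have int t : `|t| < b -> a < t < b.
  by move=> /ltr_normlP [? ?]; apply/andP; split; lra.
have I0 : a <= 0 <= b by apply/andP; split; lra.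
have [d1 _ d2 _] := usc I0.
split.
  apply: (fixD (b0 := b0)) => //; apply: filterS (near_I_at (int 0 _)) => //.
  by rewrite normr0.
apply: (fixD (b0 := 0)) => //.
have : \forall t \near (0 : R), `|t| < b.
  apply/nbhs_ballP; exists b => // t; rewrite /ball /= sub0r normrN //.
apply: filterS => t /int ht; rewrite addr0.
have It : a <= t <= b by case/andP: ht => ? ?; apply/andP; split; exact: ltW.
have [dt _ _ _] := usc It.
apply: (fixD (b0 := b0)) => //; exact: filterS (near_I_at ht).
Qed.

Lemma orth0 : dotp (derive1 c 0) (derive1 (derive1 c) 0) = 0.
Proof.
have hb0 : 0 < b by rewrite divr_gt0.
have I0 : a <= 0 <= b by apply/andP; split; lra.
have [_ _ d2 _] := usc I0.
apply: orthD => //; have h0 : a < 0 < b by apply/andP; split; lra.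
apply: filterS (near_I_at h0) => t It; by have [] := usc It.
Qed.

End Main.
End F.


Unset Implicit Arguments.

Theorem propositionA2 (R : realType) (l : R) (c : R -> 'rV[R]_3) :
  0 < l ->
  embedded_on c (- (l / 2)) (l / 2) ->
  unit_speed_nonzero_curvature c (- (l / 2)) (l / 2) ->
  let C := [set c s | s in [set s | - (l / 2) <= s <= l / 2]] in
  ((exists T, symmetry_of C T /\ orientation_preserving T) /\
   (exists T, symmetry_of C T /\ orientation_reversing T))
  <-> (planar C /\ exists T, symmetry_of C T /\ nontrivial_on C T).
Proof.
move=> l0 emb usc C.
have hb0 : 0 < l / 2 by rewrite divr_gt0.
have I0 : - (l / 2) <= 0 <= l / 2 by apply/andP; split; lra.
have C0 : C (c 0) by exists 0.
split.
- move=> [[P [[isoP neP imP] [AP [bP [detP HP]]]]] [N [[isoN neN imN] [AN [bN [detN HN]]]]]].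
  have oP := aff_orth isoP HP; have oN := aff_orth isoN HN.
  have nAPN : AP != AN by apply/eqP => E; move: detP; rewrite E; lra.
  have trivP : (forall s, - (l / 2) <= s <= l / 2 -> P (c s) = c s) ->
      AP != 1%:M /\ planar C.
    move=> H; have nA := aff_notid (x0 := c 0) neP HP (H 0 I0).
    split => //; apply: (agree_planar (b1 := bP) (A2 := 1%:M) (b2 := 0) nA).
    by move=> x [s Is <-]; rewrite -HP H // mulmx1 addr0.
  have trivN : (forall s, - (l / 2) <= s <= l / 2 -> N (c s) = c s) ->
      AN != 1%:M /\ planar C.
    move=> H; have nA := aff_notid (x0 := c 0) neN HN (H 0 I0).
    split => //; apply: (agree_planar (b1 := bN) (A2 := 1%:M) (b2 := 0) nA).
    by move=> x [s Is <-]; rewrite -HN H // mulmx1 addr0.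
  have KP := key l0 emb usc isoP imP; have KN := key l0 emb usc isoN imN.
  have pl : planar C.
    case: KP => [/trivP [] //|RP].
    case: KN => [/trivN [] //|RN].
    apply: (agree_planar (b1 := bP) (b2 := bN) nAPN) => x [s Is <-].
    by rewrite -HP -HN RP // RN.
  split => //.
  have [ntP|tP] := pselect (nontrivial_on C P).
    by exists P; split.
  have [ntN|tN] := pselect (nontrivial_on C N).
    by exists N; split.
  exfalso.
  have fP s : - (l / 2) <= s <= l / 2 -> P (c s) = c s.
    move=> Is; apply/eqP; apply/negP => /negP ne; apply: tP; exists (c s).
      by exists s.
    by apply/eqP.
  have fN s : - (l / 2) <= s <= l / 2 -> N (c s) = c s.
    move=> Is; apply/eqP; apply/negP => /negP ne; apply: tN; exists (c s).
      by exists s.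
    by apply/eqP.
  have [nP _] := trivP fP; have [nN _] := trivN fN.
  have [uP vP] := triv_fix l0 usc (b0 := bP) (fun s Is => etrans (esym (HP _)) (fP s Is)).
  have [uN vN] := triv_fix l0 usc (b0 := bN) (fun s Is => etrans (esym (HN _)) (fN s Is)).
  have [d1 n1 d2 n2] := usc 0 I0.
  have u0 : derive1 c 0 != 0.
    by apply/eqP => E; move: n1; rewrite E dotpE !mxE !mulr0 !addr0 => /eqP; rewrite eq_sym oner_eq0.
  have := orth_fix2 oP oN (orth0 l0 usc) u0 n2 uP vP uN vN nP nN.
  by move/eqP; rewrite (negbTE nAPN).
- move=> [[n [d [n0 Hn]]] [T [[isoT neT imT] [x0 Cx0 Tx0]]]].
  have [A [b [HT oA]]] := iso_affine isoT.
  have [S [bs [detS isoS neS fixS]]] := refl_sym n0 Hn.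
  have dA := det_orth_neq0 oA.
  have symS : symmetry_of C (fun x => x *m S + bs) by split => //; exact: image_fix.
  have symT : symmetry_of C T by [].
  have [dpos|dneg] := ltrP 0 (\det A).
    split; first by exists T; split => //; exists A, b.
    by exists (fun x => x *m S + bs); split => //; exists S, bs.
  have dneg' : \det A < 0 by rewrite lt_neqAle dA dneg.
  split; last by exists T; split => //; exists A, b.
  exists (fun x => T (x *m S + bs)); split.
    split.
    + by move=> x y; rewrite isoT isoS.
    + move=> E; apply: Tx0; have := congr1 (fun f => f x0) E; rewrite /= fixS // => H; exact: H.
    + apply/seteqP; split => y.
        by move=> [x Cx <-]; rewrite fixS //; rewrite -imT; exists x.
      move=> Cy; have : (T @` C) y by rewrite imT.
      by move=> [x Cx <-]; exists x => //; rewrite fixS.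
  exists (S *m A), (bs *m A + b); split.
    by rewrite det_mulmx; nra.
  by move=> x; rewrite HT mulmxDl mulmxA addrA.
Qed.
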